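(* Let $(E_{-1},E_0,\partial,\rho,S,\circ,\Omega)$ be an $\mathrm{LWX}$ $2$-algebroid over $M$, with $[\![\cdot,\cdot]\!]$, $J$ as below. For all $e^1\in\Gamma(E_{-1})$ and $e^0_1,e^0_2,e^0_3,e^0_4\in\Gamma(E_0)$: $$\Omega([\![e^0_1,e^0_2]\!],e^0_3,e^0_4)-\Omega([\![e^0_1,e^0_3]\!],e^0_2,e^0_4)+\Omega([\![e^0_1,e^0_4]\!],e^0_2,e^0_3)+\Omega([\![e^0_2,e^0_3]\!],e^0_1,e^0_4)-\Omega([\![e^0_2,e^0_4]\!],e^0_1,e^0_3)+\Omega([\![e^0_3,e^0_4]\!],e^0_1,e^0_2)$$ $$-[\![\Omega(e^0_1,e^0_2,e^0_3),e^0_4]\!]-[\![\Omega(e^0_1,e^0_3,e^0_4),e^0_2]\!]+[\![\Omega(e^0_1,e^0_2,e^0_4),e^0_3]\!]+[\![\Omega(e^0_2,e^0_3,e^0_4),e^0_1]\!]+\mathcal D S(\Omega(e^0_1,e^0_2,e^0_3),e^0_4)=0,$$ and $2\mathbf J+\mathbf K=-S(\Omega(\partial e^1,e^0_2,e^0_3),e^0_4)$, where $$\mathbf J=S(J(e^1,e^0_2,e^0_3),e^0_4)-S(J(e^1,e^0_2,e^0_4),e^0_3)+S(J(e^1,e^0_3,e^0_4),e^0_2)+3S(\Omega(\partial e^1,e^0_2,e^0_3),e^0_4),$$ $$\mathbf K=S([\![e^1,e^0_2]\!],[\![e^0_3,e^0_4]\!])-S([\![e^1,e^0_3]\!],[\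![e^0_2,e^0_4]\!])+S([\![e^1,e^0_4]\!],[\![e^0_2,e^0_3]\!]).$$
   Context: A Leibniz $2$-algebra $(V_{-1},V_0,d,l_2,l_3)$ consists of a complex of real vector spaces $d:V_{-1}\to V_0$, bilinear maps $l_2:V_{-i}\times V_{-j}\to V_{-i-j}$ for $0\le i+j\le 1$, and a trilinear map $l_3:V_0\times V_0\times V_0\to V_{-1}$ such that for all $w,x,y,z\in V_0$, $m,n\in V_{-1}$: (a) $d\,l_2(x,m)=l_2(x,dm)$; (b) $d\,l_2(m,x)=l_2(dm,x)$; (c) $l_2(dm,n)=l_2(m,dn)$; (d) $d\,l_3(x,y,z)=l_2(x,l_2(y,z))-l_2(l_2(x,y),z)-l_2(y,l_2(x,z))$; (e1) $l_3(x,y,dm)=l_2(x,l_2(y,m))-l_2(l_2(x,y),m)-l_2(y,l_2(x,m))$; (e2) $l_3(x,dm,y)=l_2(x,l_2(m,y))-l_2(l_2(x,m),y)-l_2(m,l_2(x,y))$; (e3) $l_3(dm,x,y)=l_2(m,l_2(x,y))-l_2(l_2(m,x),y)-l_2(x,l_2(m,y))$; (f) $l_2(w,l_3(x,y,z))-l_2(x,l_3(w,y,z))+l_2(y,l_3(w,x,z))+l_2(l_3(w,x,y),z)-l_3(l_2(w,x),y,z)-l_3(x,l_2(w,y),z)-l_3(x,y,l_2(w,z))+l_3(w,l_2(x,y),z)+l_3(w,y,l_2(x,z))-l_3(w,x,l_2(y,z))=0$. An $\mathrm{LWX}$ $2$-algebroid $(E_{-1},E_0,\partial,\rho,S,\circ,\Omega)$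 over a manifold $M$ consists of vector bundles $E_{-1},E_0$ over $M$ with $\mathcal E=E_{-1}\oplus E_0$; a nondegenerate symmetric bilinear form $S$ on $\mathcal E$ for which $E_0$ and $E_{-1}$ are both isotropic; an $\mathbb R$-bilinear operation $\circ$ on $\Gamma(\mathcal E)$ mapping $\Gamma(E_{-i})\times\Gamma(E_{-j})\to\Gamma(E_{-(i+j)})$ for $0\le i+j\le 1$ (and zero on $\Gamma(E_{-1})\times\Gamma(E_{-1})$), skew-symmetric on $\Gamma(E_0)\times\Gamma(E_0)$; an $E_{-1}$-valued $3$-form $\Omega$ on $E_0$; bundle maps $\partial:E_{-1}\to E_0$ and $\rho:E_0\to TM$ ($\rho$ is extended by zero to $E_{-1}$); such that: (i) $(\Gamma(E_{-1}),\Gamma(E_0),\partial,\circ,\Omega)$ is a Leibniz $2$-algebra (with $d=\partial$, $l_2=\circ$, $l_3=\Omega$); (ii) $e\circ e=\frac12\mathcal D S(e,e)$ for all $e\in\Gamma(\mathcal E)$, where $\mathcal D:C^\infty(M)\to\Gamma(E_{-1})$ is defined by $S(\mathcal D f,e^0)=\rho(e^0)(f)$ for all $e^0\in\Gamma(E_0)$; (iii) $S(\partial e^1_1,e^1_2)=S(e^1_1,\partial e^1_2)$ for $e^1_1,e^1_2\in\Gamma(E_{-1})$; (iv) $\rho(e_1)S(e_2,e_3)=S(e_1\circ e_2,e_3)+S(e_2,e_1\circ e_3)$ for all $e_1,e_2,e_3\in\Gamma(\mathcal E)$; (v) $S(\Omega(e^0_1,e^0_2,e^0_3),e^0_4)=-S(e^0_3,\Omega(e^0_1,e^0_2,e^0_4))$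 for all $e^0_i\in\Gamma(E_0)$. Notation: $[\![e_1,e_2]\!]=\frac12(e_1\circ e_2-e_2\circ e_1)$ for $e_1,e_2\in\Gamma(\mathcal E)$, and $J(e_1,e_2,e_3)=[\![[\![e_1,e_2]\!],e_3]\!]+[\![[\![e_2,e_3]\!],e_1]\!]+[\![[\![e_3,e_1]\!],e_2]\!]$. *)

(* Defs.v *)
From HB Require Import structures.
From mathcomp Require Import all_boot all_order all_algebra.
Set Implicit Arguments. Unset Strict Implicit. Unset Printing Implicit Defensive.
Import GRing.Theory.
Local Open Scope ring_scope.

(* R     : the real scalars (a real field)
   A     : the commutative R-algebra C^oo(M) of smooth functions
   V1    : the A-module Gamma(E_{-1}) of sections of E_{-1}
   V0    : the A-module Gamma(E_0) of sections of E_0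
   Sections of calE = E_{-1} (+) E_0 are pairs (V1 * V0).
   Real scalars act on sections through r%:A. *)

Section LWX.
Variables (R : realFieldType) (A : comAlgType R) (V1 V0 : lmodType A).

Local Notation E := (V1 * V0)%type.

Definition in1 (x : V1) : E := (x, 0).
Definition in0 (y : V0) : E := (0, y).

Definition Rlinear (U W : lmodType A) (f : U -> W) : Prop :=
  forall (r : R) x y, f (r%:A *: x + y) = r%:A *: f x + f y.

Definition Alinear (U W : lmodType A) (f : U -> W) : Prop :=
  forall (a : A) x y, f (a *: x + y) = a *: f x + f y.

(* Given the graded components of the operation o on Gamma(calE):
     c00 : Gamma(E_0)    x Gamma(E_0)    -> Gamma(E_0)
     c01 : Gamma(E_0)    x Gamma(E_{-1}) -> Gamma(E_{-1})
     c10 : Gamma(E_{-1}) x Gamma(E_0)    -> Gamma(E_{-1})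
   (zero on Gamma(E_{-1}) x Gamma(E_{-1})), the bilinear extension to calE: *)
Definition circE (c00 : V0 -> V0 -> V0) (c01 : V0 -> V1 -> V1)
  (c10 : V1 -> V0 -> V1) (e e' : E) : E :=
  (c10 e.1 e'.2 + c01 e.2 e'.1, c00 e.2 e'.2).

Definition brk c00 c01 c10 (e e' : E) : E :=
  (2^-1 : R)%:A *: (circE c00 c01 c10 e e' - circE c00 c01 c10 e' e).

Definition Jac c00 c01 c10 (e1 e2 e3 : E) : E :=
  brk c00 c01 c10 (brk c00 c01 c10 e1 e2) e3
  + brk c00 c01 c10 (brk c00 c01 c10 e2 e3) e1
  + brk c00 c01 c10 (brk c00 c01 c10 e3 e1) e2.

(* Leibniz 2-algebra (V_{-1},V_0,d,l2,l3) with l2 given by its components *)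
Definition Leibniz2 (d : V1 -> V0) (c00 : V0 -> V0 -> V0) (c01 : V0 -> V1 -> V1)
  (c10 : V1 -> V0 -> V1) (l3 : V0 -> V0 -> V0 -> V1) : Prop :=
  Rlinear d /\
  (forall x, Rlinear (c00 x)) /\ (forall y, Rlinear (fun x => c00 x y)) /\
  (forall x, Rlinear (c01 x)) /\ (forall m, Rlinear (fun x => c01 x m)) /\
  (forall m, Rlinear (c10 m)) /\ (forall x, Rlinear (fun m => c10 m x)) /\
  (forall x y, Rlinear (l3 x y)) /\ (forall x z, Rlinear (fun y => l3 x y z)) /\
  (forall y z, Rlinear (fun x => l3 x y z)) /\
  (forall x m, d (c01 x m) = c00 x (d m)) /\
  (forall m x, d (c10 m x) = c00 (d m) x) /\
  (forall m n, c01 (d m) n = c10 m (d n)) /\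
  (* (d) *) (forall x y z,
     d (l3 x y z) = c00 x (c00 y z) - c00 (c00 x y) z - c00 y (c00 x z)) /\
  (* (e1) *) (forall x y m,
     l3 x y (d m) = c01 x (c01 y m) - c01 (c00 x y) m - c01 y (c01 x m)) /\
  (forall x y m,
     l3 x (d m) y = c01 x (c10 m y) - c10 (c01 x m) y - c10 m (c00 x y)) /\
  (forall x y m,
     l3 (d m) x y = c10 m (c00 x y) - c10 (c10 m x) y - c01 x (c10 m y)) /\
  (* (f) *) (forall w x y z,
     c01 w (l3 x y z) - c01 x (l3 w y z) + c01 y (l3 w x z) + c10 (l3 w x y) z
     - l3 (c00 w x) y z - l3 x (c00 w y) z - l3 x y (c00 w z)
     + l3 w (c00 x y) z + l3 w y (c00 x z) - l3 w x (c00 y z) = 0).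

(* The LWX 2-algebroid axioms, for data
   (E_{-1},E_0, partial = d, rho, S, o = (c00,c01,c10), Omega),
   together with the map D : C^oo(M) -> Gamma(E_{-1}) characterised by
   S(D f, e0) = rho(e0)(f). *)
Definition LWX2 (d : V1 -> V0) (rho : V0 -> A -> A) (S : E -> E -> A)
  (c00 : V0 -> V0 -> V0) (c01 : V0 -> V1 -> V1) (c10 : V1 -> V0 -> V1)
  (Om : V0 -> V0 -> V0 -> V1) (D : A -> V1) : Prop :=
  Alinear d /\
  (* rho is a bundle map E_0 -> TM: C^oo(M)-linear, valued in vector fields
     (R-linear derivations of C^oo(M)) *)
  (forall (a : A) e e' f, rho (a *: e + e') f = a * rho e f + rho e' f) /\
  (forall e (r : R) f g, rho e (r%:A * f + g) = r%:A * rho e f + rho e g) /\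
  (forall e f g, rho e (f * g) = f * rho e g + rho e f * g) /\
  (forall e e', S e e' = S e' e) /\
  (forall (a : A) e e' e'', S (a *: e + e') e'' = a * S e e'' + S e' e'') /\
  (forall e, (forall e', S e e' = 0) -> e = 0) /\
  (forall y y', S (in0 y) (in0 y') = 0) /\
  (forall x x', S (in1 x) (in1 x') = 0) /\
  (forall x y, Alinear (Om x y)) /\ (forall x z, Alinear (fun y => Om x y z)) /\
  (forall y z, Alinear (fun x => Om x y z)) /\
  (forall x y, Om x x y = 0) /\ (forall x y, Om x y y = 0) /\
  (forall x y, Om x y x = 0) /\
  (forall x y, c00 x y = - c00 y x) /\
  (forall f y, S (in1 (D f)) (in0 y) = rho y f) /\
  Leibniz2 d c00 c01 c10 Om /\
  (* (ii) *) (forall e : E,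
     circE c00 c01 c10 e e = in1 ((2^-1 : R)%:A *: D (S e e))) /\
  (* (iii) *) (forall x x', S (in0 (d x)) (in1 x') = S (in1 x) (in0 (d x'))) /\
  (* (iv) *) (forall e1 e2 e3 : E,
     rho e1.2 (S e2 e3) = S (circE c00 c01 c10 e1 e2) e3
                          + S e2 (circE c00 c01 c10 e1 e3)) /\
  (* (v) *) (forall y1 y2 y3 y4,
     S (in1 (Om y1 y2 y3)) (in0 y4) = - S (in0 y3) (in1 (Om y1 y2 y4))).

End LWX.
Arguments in1 {R A V1 V0} x.
Arguments in0 {R A V1 V0} y.

(* Main.v *)
Require Import Defs.
From HB Require Import structures.
From mathcomp Require Import all_boot all_order all_algebra.
From mathcomp Require Import ring.
Import GRing.Theory.
Local Open Scope ring_scope.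

Lemma RlinD {R : realFieldType} {A : comAlgType R} {U W : lmodType A} {f : U -> W} :
  Rlinear f -> forall x y, f (x + y) = f x + f y.
Proof. by move=> H x y; have := H 1 x y; rewrite !scale1r. Qed.

Lemma Rlin0 {R : realFieldType} {A : comAlgType R} {U W : lmodType A} {f : U -> W} :
  Rlinear f -> f 0 = 0.
Proof.
move=> H; have h := RlinD H 0 0; rewrite addr0 in h.
by apply: (addrI (f 0)); rewrite -h addr0.
Qed.

Lemma RlinN {R : realFieldType} {A : comAlgType R} {U W : lmodType A} {f : U -> W} :
  Rlinear f -> forall x, f (- x) = - f x.
Proof.
move=> H x; apply/eqP; rewrite -addr_eq0 -RlinD // addNr.
by rewrite (Rlin0 H).
Qed.

Lemma RlinZ {R : realFieldType} {A : comAlgType R} {U W : lmodType A} {f : U -> W} :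
  Rlinear f -> forall (r : R) x, f (r%:A *: x) = r%:A *: f x.
Proof. by move=> H r x; have := H r x 0; rewrite (Rlin0 H) !addr0. Qed.

Lemma AlinR {R : realFieldType} {A : comAlgType R} {U W : lmodType A} {f : U -> W} :
  Alinear f -> Rlinear f.
Proof. by move=> H r x y; rewrite H. Qed.

Lemma AlinZ {R : realFieldType} {A : comAlgType R} {U W : lmodType A} {f : U -> W} :
  Alinear f -> forall (a : A) x, f (a *: x) = a *: f x.
Proof. by move=> H a x; have := H a x 0; rewrite (Rlin0 (AlinR H)) !addr0. Qed.

Lemma zero_by1 {Rg : comPzRingType} {g k : Rg} (c : Rg) : k = 0 -> g = c * k -> g = 0.
Proof. by move=> -> ->; rewrite mulr0. Qed.
Lemma zero_by2 {Rg : comPzRingType} {g k1 k2 : Rg} (c1 c2 : Rg) :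
  k1 = 0 -> k2 = 0 -> g = c1 * k1 + c2 * k2 -> g = 0.
Proof. by move=> -> -> ->; rewrite !mulr0 addr0. Qed.
Lemma zero_by3 {Rg : comPzRingType} {g k1 k2 k3 : Rg} (c1 c2 c3 : Rg) :
  k1 = 0 -> k2 = 0 -> k3 = 0 -> g = c1 * k1 + c2 * k2 + c3 * k3 -> g = 0.
Proof. by move=> -> -> -> ->; rewrite !mulr0 !addr0. Qed.
Lemma eq_by0 {Rg : comPzRingType} {a b : Rg} : a - b = 0 -> a = b.
Proof. by move/eqP; rewrite subr_eq0 => /eqP. Qed.
Lemma sub0 {Rg : comPzRingType} {a b : Rg} : a = b -> a - b = 0.
Proof. by move=> ->; rewrite subrr. Qed.

Theorem mainTheorem5 (R : realFieldType) (A : comAlgType R) (V1 V0 : lmodType A)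
  (d : V1 -> V0) (rho : V0 -> A -> A) (S : (V1 * V0)%type -> (V1 * V0)%type -> A)
  (c00 : V0 -> V0 -> V0) (c01 : V0 -> V1 -> V1) (c10 : V1 -> V0 -> V1)
  (Om : V0 -> V0 -> V0 -> V1) (D : A -> V1) :
  LWX2 d rho S c00 c01 c10 Om D ->
  forall (x : V1) (y1 y2 y3 y4 : V0),
  let br := brk c00 c01 c10 in
  let J := Jac c00 c01 c10 in
  (in1 (Om (br (in0 y1) (in0 y2)).2 y3 y4 - Om (br (in0 y1) (in0 y3)).2 y2 y4
        + Om (br (in0 y1) (in0 y4)).2 y2 y3 + Om (br (in0 y2) (in0 y3)).2 y1 y4
        - Om (br (in0 y2) (in0 y4)).2 y1 y3 + Om (br (in0 y3) (in0 y4)).2 y1 y2)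
   - br (in1 (Om y1 y2 y3)) (in0 y4) - br (in1 (Om y1 y3 y4)) (in0 y2)
   + br (in1 (Om y1 y2 y4)) (in0 y3) + br (in1 (Om y2 y3 y4)) (in0 y1)
   + in1 (D (S (in1 (Om y1 y2 y3)) (in0 y4))) = 0)
  /\
  (let bJ := S (J (in1 x) (in0 y2) (in0 y3)) (in0 y4)
             - S (J (in1 x) (in0 y2) (in0 y4)) (in0 y3)
             + S (J (in1 x) (in0 y3) (in0 y4)) (in0 y2)
             + 3%:R * S (in1 (Om (d x) y2 y3)) (in0 y4) in
   let bK := S (br (in1 x) (in0 y2)) (br (in0 y3) (in0 y4))
             - S (br (in1 x) (in0 y3)) (br (in0 y2) (in0 y4))
             + S (br (in1 x) (in0 y4)) (br (in0 y2) (in0 y3)) in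
   2%:R * bJ + bK = - S (in1 (Om (d x) y2 y3)) (in0 y4)).
Proof.
move=> [dA [rhoA [rhoR [rhoDer [Ssym [SA [Snd [S00 [S11 [OmA1 [OmA2 [OmA3
  [Om12 [Om23 [Om13 [c00sk [HD [HL [Hii [Hiii [Hiv Hv]]]]]]]]]]]]]]]]]]]]].
move: HL => [dR [c00R1 [c00R2 [c01R1 [c01R2 [c10R1 [c10R2 [OmR1 [OmR2 [OmR3
  [Ha [Hb [Hc [Hd [He1 [He2 [He3 Hf]]]]]]]]]]]]]]]]].
have c00D2 : forall a b c, c00 a (b + c) = c00 a b + c00 a c by move=> *; apply: RlinD.
have c00N2 : forall a b, c00 a (- b) = - c00 a b by move=> *; apply: RlinN.
have c00Z2 : forall a (r : R) b, c00 a (r%:A *: b) = r%:A *: c00 a b by move=> *; apply: RlinZ.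
have c0002 : forall a, c00 a 0 = 0 by move=> *; apply: Rlin0.
have c00D1 : forall a b c, c00 (b + c) a = c00 b a + c00 c a
  by move=> a *; apply: (RlinD (c00R2 a)).
have c00N1 : forall a b, c00 (- b) a = - c00 b a by move=> a *; apply: (RlinN (c00R2 a)).
have c00Z1 : forall a (r : R) b, c00 (r%:A *: b) a = r%:A *: c00 b a
  by move=> a *; apply: (RlinZ (c00R2 a)).
have c0001 : forall a, c00 0 a = 0 by move=> a; apply: (Rlin0 (c00R2 a)).
have c01D2 : forall a b c, c01 a (b + c) = c01 a b + c01 a c by move=> *; apply: RlinD.
have c01N2 : forall a b, c01 a (- b) = - c01 a b by move=> *; apply: RlinN.
have c01Z2 : forall a (r : R) b, c01 a (r%:A *: b) = r%:A *: c01 a b by move=> *; apply: RlinZ.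
have c0102 : forall a, c01 a 0 = 0 by move=> *; apply: Rlin0.
have c01D1 : forall a b c, c01 (b + c) a = c01 b a + c01 c a
  by move=> a *; apply: (RlinD (c01R2 a)).
have c01N1 : forall a b, c01 (- b) a = - c01 b a by move=> a *; apply: (RlinN (c01R2 a)).
have c01Z1 : forall a (r : R) b, c01 (r%:A *: b) a = r%:A *: c01 b a
  by move=> a *; apply: (RlinZ (c01R2 a)).
have c0101 : forall a, c01 0 a = 0 by move=> a; apply: (Rlin0 (c01R2 a)).
have c10D2 : forall a b c, c10 a (b + c) = c10 a b + c10 a c by move=> *; apply: RlinD.
have c10N2 : forall a b, c10 a (- b) = - c10 a b by move=> *; apply: RlinN.
have c10Z2 : forall a (r : R) b, c10 a (r%:A *: b) = r%:A *: c10 a b by move=> *; apply: RlinZ.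
have c1002 : forall a, c10 a 0 = 0 by move=> *; apply: Rlin0.
have c10D1 : forall a b c, c10 (b + c) a = c10 b a + c10 c a
  by move=> a *; apply: (RlinD (c10R2 a)).
have c10N1 : forall a b, c10 (- b) a = - c10 b a by move=> a *; apply: (RlinN (c10R2 a)).
have c10Z1 : forall a (r : R) b, c10 (r%:A *: b) a = r%:A *: c10 b a
  by move=> a *; apply: (RlinZ (c10R2 a)).
have c1001 : forall a, c10 0 a = 0 by move=> a; apply: (Rlin0 (c10R2 a)).
have OmD3 : forall a b c e, Om a b (c + e) = Om a b c + Om a b e by move=> *; apply: RlinD; apply: AlinR.
have OmN3 : forall a b c, Om a b (- c) = - Om a b c by move=> *; apply: RlinN; apply: AlinR.
have OmZ3 : forall a b (r : A) c, Om a b (r *: c) = r *: Om a b c by move=> *; apply: AlinZ.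
have OmD2 : forall a b c e, Om a (c + e) b = Om a c b + Om a e b
  by move=> a b *; apply: (RlinD (AlinR (OmA2 a b))).
have OmN2 : forall a b c, Om a (- c) b = - Om a c b
  by move=> a b *; apply: (RlinN (AlinR (OmA2 a b))).
have OmZ2 : forall a b (r : A) c, Om a (r *: c) b = r *: Om a c b
  by move=> a b *; apply: (AlinZ (OmA2 a b)).
have OmD1 : forall a b c e, Om (c + e) a b = Om c a b + Om e a b
  by move=> a b *; apply: (RlinD (AlinR (OmA3 a b))).
have OmN1 : forall a b c, Om (- c) a b = - Om c a b
  by move=> a b *; apply: (RlinN (AlinR (OmA3 a b))).
have OmZ1 : forall a b (r : A) c, Om (r *: c) a b = r *: Om c a b
  by move=> a b *; apply: (AlinZ (OmA3 a b)).
have Omsw12 : forall a b c, Om a b c = - Om b a c.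
  move=> a b c; apply/eqP; rewrite -addr_eq0; apply/eqP.
  have := Om12 (a + b) c; rewrite !OmD1 !OmD2 !Om12 add0r addr0.
  by move=> <-; rewrite addrC.
have Omsw23 : forall a b c, Om a b c = - Om a c b.
  move=> a b c; apply/eqP; rewrite -addr_eq0; apply/eqP.
  have := Om23 a (b + c); rewrite !OmD3 !OmD2 !Om23 add0r addr0.
  by move=> <-; rewrite addrC.
have Omsw13 : forall a b c, Om a b c = - Om c b a.
  move=> a b c; apply/eqP; rewrite -addr_eq0; apply/eqP.
  have := Om13 (a + c) b; rewrite !OmD3 !OmD1 !Om13 add0r addr0.
  by move=> <-; rewrite addrC.
have pairD : forall (a c : V1) (b e : V0), (a, b) + (c, e) = (a + c, b + e) by [].
have pairN : forall (a : V1) (b : V0), - (a, b) = (- a, - b) by [].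
have pairZ : forall (r : A) (a : V1) (b : V0), r *: (a, b) = (r *: a, r *: b) by [].
have SD1 : forall e e' e'', S (e + e') e'' = S e e'' + S e' e''.
  by move=> e e' e''; have := SA 1 e e' e''; rewrite scale1r mul1r.
have SZ1 : forall (a : A) e e'', S (a *: e) e'' = a * S e e''.
  by move=> a e e''; have := SA a e 0 e''; rewrite addr0 => ->;
     rewrite -[RHS]addr0; congr (_ + _); apply: (addrI (S 0 e'')); rewrite -SD1 !addr0.
have S01 : forall e, S 0 e = 0 by move=> e; apply: (addrI (S 0 e)); rewrite -SD1 !addr0.
have SN1 : forall e e', S (- e) e' = - S e e'.
  by move=> e e'; apply/eqP; rewrite -addr_eq0 -SD1 addNr S01.
have SD2 : forall e e' e'', S e'' (e + e') = S e'' e + S e'' e'.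
  by move=> e e' e''; rewrite Ssym SD1 Ssym [S e' e'']Ssym.
have SN2 : forall e e', S e' (- e) = - S e' e by move=> *; rewrite Ssym SN1 Ssym.
have SZ2 : forall (a : A) e e'', S e'' (a *: e) = a * S e'' e by move=> *; rewrite Ssym SZ1 Ssym.
have S02 : forall e, S e 0 = 0 by move=> e; rewrite Ssym S01.
have Sdec : forall e e', S e e' = S (e.1, 0) (0, e'.2) + S (e'.1, 0) (0, e.2).
  move=> [m y] [n z] /=.
  have -> : (m, y) = (m, 0) + (0, y) :> (V1 * V0)%type by rewrite pairD addr0 add0r.
  have -> : (n, z) = (n, 0) + (0, z) :> (V1 * V0)%type by rewrite pairD addr0 add0r.
  rewrite !SD1 !SD2 (S11 m n) (S00 y z) [S (0, y) (n, 0)]Ssym.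
  by rewrite addr0 add0r.
have s1D : forall m n z, S (m + n, 0) (0, z) = S (m, 0) (0, z) + S (n, 0) (0, z).
  by move=> m n z; rewrite -SD1 pairD addr0.
have s1N : forall m z, S (- m, 0) (0, z) = - S (m, 0) (0, z).
  by move=> m z; rewrite -SN1 pairN oppr0.
have s1Z : forall (a : A) m z, S (a *: m, 0) (0, z) = a * S (m, 0) (0, z).
  by move=> a m z; rewrite -SZ1 pairZ scaler0.
have s10 : forall z, S (0, 0) (0, z) = 0 by move=> z; apply: S01.
have s2D : forall m y z, S (m, 0) (0, y + z) = S (m, 0) (0, y) + S (m, 0) (0, z).
  by move=> m y z; rewrite -SD2 pairD addr0.
have s2N : forall m z, S (m, 0) (0, - z) = - S (m, 0) (0, z).
  by move=> m z; rewrite -SN2 pairN oppr0.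
have s2Z : forall (a : A) m z, S (m, 0) (0, a *: z) = a * S (m, 0) (0, z).
  by move=> a m z; rewrite -SZ2 pairZ scaler0.
have s20 : forall m, S (m, 0) (0, 0) = 0 by move=> m; apply: S02.
have rhoD1 : forall e e' f, rho (e + e') f = rho e f + rho e' f.
  by move=> e e' f; have := rhoA 1 e e' f; rewrite scale1r mul1r.
have rhoZ1 : forall (a : A) e f, rho (a *: e) f = a * rho e f.
  move=> a e f; have := rhoA a e 0 f; rewrite addr0 => ->.
  have h : rho 0 f = 0 by apply: (addrI (rho 0 f)); rewrite -rhoD1 !addr0.
  by rewrite h addr0.
have rho01 : forall f, rho 0 f = 0 by move=> f; apply: (addrI (rho 0 f)); rewrite -rhoD1 !addr0.
have rhoN1 : forall e f, rho (- e) f = - rho e f.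
  by move=> e f; apply/eqP; rewrite -addr_eq0 -rhoD1 addNr rho01.
have rhoD2 : forall e f g, rho e (f + g) = rho e f + rho e g.
  by move=> e f g; have := rhoR e 1 f g; rewrite scale1r !mul1r.
have rho02 : forall e, rho e 0 = 0 by move=> e; apply: (addrI (rho e 0)); rewrite -rhoD2 !addr0.
have rhoN2 : forall e f, rho e (- f) = - rho e f.
  by move=> e f; apply/eqP; rewrite -addr_eq0 -rhoD2 addNr rho02.
have rhoZ2 : forall e (r : R) f, rho e (r%:A * f) = r%:A * rho e f.
  by move=> e r f; have := rhoR e r f 0; rewrite !addr0 rho02 addr0.
have HD' : forall f y, S (D f, 0) (0, y) = rho y f := HD.
have v1eq : forall v : V1, (forall z, S (v, 0) (0, z) = 0) -> v = 0.
  move=> v hv; have : (v, 0) = 0 :> (V1 * V0)%type.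
    by apply: Snd => -[n z]; rewrite Sdec /= hv s20 addr0.
  by move=> [].
have DD : forall f g, D (f + g) = D f + D g.
  move=> f g; apply/eqP; rewrite -subr_eq0; apply/eqP; apply: v1eq => z.
  by rewrite s1D s1N s1D !HD' rhoD2; ring.
have t2 : (2^-1 : R)%:A + (2^-1 : R)%:A = 1 :> A.
  rewrite -scalerDl.
  have -> : (2^-1 + 2^-1 : R) = 1.
  by rewrite -mulr2n -[_ *+ 2]mulr_natl mulfV // Num.Theory.pnatr_eq0.
  by rewrite scale1r.
have sc01 : forall y m z,
  S (c01 y m, 0) (0, z) = rho y (S (m, 0) (0, z)) - S (m, 0) (0, c00 y z).
  move=> y m z; have := Hiv (0, y) (m, 0) (0, z).
  rewrite /circE /= c1001 c0002 c1001 c0102 add0r addr0 => ->.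
  by rewrite addrK.
have cdec : forall m y, c10 m y = D (S (m, 0) (0, y)) - c01 y m.
  move=> m y; have := Hii (m, y); rewrite /circE /in1 /= => /(congr1 fst) /= h.
  apply/eqP; rewrite eq_sym subr_eq h [S (m, y) _]Sdec /= DD scalerDr -scalerDl t2 scale1r //.
have sc10 : forall m y z,
  S (c10 m y, 0) (0, z) = rho z (S (m, 0) (0, y)) - S (c01 y m, 0) (0, z).
  by move=> m y z; rewrite cdec s1D s1N HD'.
have Hv' : forall a b c e, S (Om a b c, 0) (0, e) = - S (Om a b e, 0) (0, c).
  by move=> a b c e; rewrite (Hv a b c e) Ssym.
have Hiii' : forall m n, S (n, 0) (0, d m) = S (m, 0) (0, d n).
  by move=> m n; rewrite Ssym; apply: Hiii.
have E01 : forall y m z,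
  rho y (S (m, 0) (0, z)) = S (c01 y m, 0) (0, z) + S (m, 0) (0, c00 y z).
  by move=> y m z; rewrite sc01 subrK.
have rhoc : forall a b m c, rho (c00 a b) (S (m, 0) (0, c))
   = rho a (rho b (S (m, 0) (0, c))) - rho b (rho a (S (m, 0) (0, c))).
  move=> a b m c.
  have h1 := congr1 (fun v => S (v, 0) (0, c)) (He1 a b m).
  have h2 := congr1 (fun v => S (m, 0) (0, v)) (Hd a b c).
  move: h1 h2 => /= h1 h2; rewrite !s1D !s1N in h1; rewrite !s2D !s2N in h2.
  have h3 := Hiii' m (Om a b c); rewrite Hv' in h3.
  apply: eq_by0.
  rewrite !E01 !rhoD2 !E01.
  apply: (zero_by3 1 1 1 (sub0 h1) (sub0 h2) (sub0 h3)).
  ring.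
move=> x y1 y2 y3 y4 br J; split.
  have pair0 : forall (a : V1) (b : V0), a = 0 -> b = 0 -> (a, b) = 0 :> (V1 * V0)%type.
    by move=> a b -> ->.
  have tD : forall v : V1, v = ((2^-1 : R)%:A + (2^-1 : R)%:A) *: v by move=> v; rewrite t2 scale1r.
  rewrite [D _]tD.
  rewrite /br /brk /in1 /in0 /circE /=.
  rewrite ?(pairN, pairD, pairZ).
  apply: pair0.
    apply: v1eq => u.
    have n1 : S (Om y1 y3 y4, 0) (0, y2) = S (Om y1 y2 y3, 0) (0, y4).
      by rewrite [LHS]Hv' (Omsw23 y1 y3 y2) s1N opprK.
    have n2 : S (Om y1 y2 y4, 0) (0, y3) = - S (Om y1 y2 y3, 0) (0, y4).
      by rewrite [LHS]Hv'.
    have n3 : S (Om y2 y3 y4, 0) (0, y1) = - S (Om y1 y2 y3, 0) (0, y4).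
      by rewrite [LHS]Hv' (Omsw13 y2 y3 y1) (Omsw23 y1 y3 y2) opprK.
    have hF := congr1 (fun v => S (v, 0) (0, u)) (Hf y1 y2 y3 y4).
    move: hF => /= hF.
    rewrite s10 in hF.
    rewrite ?(s1D, s1N, sc10, sc01) in hF.
    rewrite (Omsw12 y2 (c00 y1 y3) y4) (Omsw13 y2 y3 (c00 y1 y4)) (Omsw23 (c00 y1 y4) y3 y2)
       (Omsw12 y1 (c00 y2 y3) y4) (Omsw13 y1 y3 (c00 y2 y4)) (Omsw23 (c00 y2 y4) y3 y1)
       (Omsw13 y1 y2 (c00 y3 y4)) (Omsw23 (c00 y3 y4) y2 y1) ?opprK in hF.
    rewrite ?(s1D, s1N, n1, n2, n3, rhoN2) in hF.
    rewrite ?(c1001, c1002, c0101, c0102, c0001, c0002, add0r, addr0, subr0, sub0r, subrr, scaler0, oppr0).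
    rewrite (c00sk y2 y1) (c00sk y3 y1) (c00sk y4 y1) (c00sk y3 y2) (c00sk y4 y2) (c00sk y4 y3).
    rewrite ?(OmD1, OmN1, OmZ1, opprK).
    rewrite ?(s1D, s1N, s1Z, sc10, sc01, HD').
    rewrite ?(n1, n2, n3, rhoN2, rhoD2).
    move: ((2^-1 : R)%:A) => t.
    apply: (zero_by1 (- (t + t)) hF); ring.
  rewrite /= ?(c1001, c1002, c0101, c0102, c0001, c0002, add0r, addr0, subr0, sub0r, subrr, scaler0, oppr0) //.
move=> bJ bK; rewrite /bJ /bK /J /br /Jac /brk /in1 /in0.
have tt4 : forall X : A, X = ((2^-1 : R)%:A + (2^-1 : R)%:A) * (((2^-1 : R)%:A + (2^-1 : R)%:A) * X).
  by move=> X; rewrite t2 !mul1r.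
rewrite [S (Om (d x) y2 y3, 0) (0, y4)]tt4.
have hJ : S (x, 0) (0, d (Om y2 y3 y4)) = - S (Om (d x) y2 y3, 0) (0, y4).
  rewrite -Hiii' Hv' (Omsw23 y2 y3 (d x)) (Omsw12 y2 (d x) y3) opprK //.
rewrite Hd (c00sk (c00 y2 y3) y4) !s2D !s2N in hJ.
rewrite !(Sdec (_ *: _)) /circE /=.
rewrite ?(c1001, c1002, c0101, c0102, c0001, c0002, add0r, addr0, subr0, sub0r, subrr, scaler0, oppr0).
rewrite ?(pairN, pairD, pairZ, oppr0, addr0, scaler0, s10).
rewrite (c00sk y3 y2) (c00sk y4 y2) (c00sk y4 y3).
rewrite ?(c10D1, c10N1, c10Z1, c10D2, c10N2, c10Z2, c01D1, c01N1, c01Z1, c01D2, c01N2, c01Z2, c00D1, c00N1, c00Z1, c00D2, c00N2, c00Z2).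
rewrite ?(sc10, sc01, rhoD2, rhoN2, rhoZ2, rhoN1, s1D, s1N, s1Z, s2D, s2N, s2Z).
rewrite ?(c00D2, c00N2, c00Z2, rhoD1, rhoN1, rhoZ1, s2D, s2N, s2Z, opprK).
rewrite ?(c00sk y3 y2, c00sk y4 y2, c00sk y4 y3).
rewrite ?(c00N2, c00N1, s2N, rhoN1).
rewrite ?(c00sk (c00 y2 y3) y4, c00sk (c00 y2 y4) y3, c00sk (c00 y3 y4) y2).
rewrite ?(c00N1, s2N).
rewrite ?rhoc ?(rhoD2, rhoN2).
move: ((2^-1 : R)%:A) hJ => t hJ.
apply: eq_by0; apply: (zero_by1 (28%:R * t * t) (sub0 hJ)); ring.
Qed.
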